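(* If $G$ is a connected graph with girth $g\ge 3$ and minimum degree $\delta\ge 3$, then $F_c(G)\ge \delta+g-3$, and this bound is sharp.
   Context: Forcing process: given a set of initially colored vertices, at each step a colored vertex with exactly one non-colored neighbor forces (colors) that neighbor. A set $S\subseteq V(G)$ is a forcing set if iterating this process from $S$ eventually colors all vertices; it is a connected forcing set if moreover the induced subgraph $G[S]$ is connected. $F_c(G)$ is the minimum cardinality of a connected forcing set of $G$. The girth of $G$ is the length of a shortest cycle in $G$. *)

(* Defs.v *)
From mathcomp Require Import all_boot.
Set Implicit Arguments. Unset Strict Implicit. Unset Printing Implicit Defensive.

Section Graphs.
Variable T : finType.
Variable e : rel T.

Definition simple_graph : Prop := symmetric e /\ irreflexive e.

Definition nbhd (v : T) : {set T} := [set w | e v w].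
Definition deg (v : T) : nat := #|nbhd v|.

Definition min_degree (delta : nat) : Prop :=
  (exists v, deg v = delta) /\ (forall v, delta <= deg v).

Definition connected_graph : Prop := forall x y : T, connect e x y.

Definition is_cycle (s : seq T) : Prop := [/\ uniq s, 3 <= size s & cycle e s].

Definition girth (g : nat) : Prop :=
  (exists s, is_cycle s /\ size s = g) /\ (forall s, is_cycle s -> g <= size s).

Definition force_step (S : {set T}) (u : T) : Prop :=
  exists v, [/\ v \in S, u \notin S & nbhd v :\: S = [set u]].

Inductive forces_all : {set T} -> Prop :=
| forces_done S : S = [set: T] -> forces_all S
| forces_more S u : force_step S u -> forces_all (u |: S) -> forces_all S.

Definition forcing_set (S : {set T}) : Prop := forces_all S.

Definition induced_connected (S : {set T}) : Prop :=
  forall x y, x \in S -> y \in S ->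
    connect [rel a b | [&& e a b, a \in S & b \in S]] x y.

Definition connected_forcing_set (S : {set T}) : Prop :=
  forcing_set S /\ induced_connected S.

Definition is_Fc (k : nat) : Prop :=
  (exists S, connected_forcing_set S /\ #|S| = k) /\
  (forall S, connected_forcing_set S -> k <= #|S|).

End Graphs.

(* Main.v *)
Require Import Defs.
From mathcomp Require Import all_boot.
From mathcomp Require Import zify.
Set Implicit Arguments. Unset Strict Implicit. Unset Printing Implicit Defensive.

Section Aux.
Variable T : finType.
Implicit Types (r : rel T).

Definition minpath r v p t := [/\ path r v p, last v p = t &
  forall q, path r v q -> last v q = t -> size p <= size q].

Lemma minpath_exists r v t : connect r v t -> exists p, minpath r v p t.
Proof.
move=> /connectP [p0 Hp0 Ht].
pose P n := [exists p : n.-tuple T, path r v p && (last v p == t)].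
have exP : exists n, P n.
  by exists (size p0); apply/existsP; exists (in_tuple p0); rewrite /= Hp0 /= Ht eqxx.
case: (ex_minnP exP) => n /existsP [p /andP [Hp /eqP Hl]] Hmin.
exists p; split => // q Hq Hlq.
rewrite size_tuple; apply: Hmin; apply/existsP; exists (in_tuple q).
by rewrite /= Hq /= Hlq eqxx.
Qed.

Lemma minpath_start r v p t y : minpath r v p t -> y \in p -> r v y -> y = head v p.
Proof.
case=> Hp Hl Hm Hy Hvy; move: Hy Hp Hl Hm => /splitPr [p1 p2] Hp Hl Hm.
case: p1 Hp Hl Hm => [|a p1] //= Hp Hl Hm.
have := Hm (y :: p2).
move: Hp => /andP [_ Hp]; move: Hp; rewrite cat_path /= => /and3P [_ _ Hp2].
rewrite /= Hvy Hp2 => /(_ isT).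
rewrite last_cat /= in Hl => /(_ Hl).
rewrite size_cat /=; lia.
Qed.

Lemma minpath_uniq r v p t : minpath r v p t -> uniq (v :: p).
Proof.
elim: p v => [|y p IH] v //= [Hp Hl Hm].
apply/andP; split.
  apply/negP => Hv.
  have Hv' : v \in y :: p by [].
  move: Hv' Hp Hl Hm; move=> /splitPr [p1 p2] Hp Hl Hm.
  have := Hm p2.
  move: Hp; rewrite cat_path /= => /andP [_ /andP [_ Hp2]].
  rewrite Hp2 => /(_ isT).
  rewrite last_cat /= in Hl => /(_ Hl).
  rewrite size_cat /=; lia.
apply: (IH y); split.
- by case/andP: Hp.
- by [].
- move=> q Hq Hlq; have := Hm (y :: q).
  case/andP: Hp => Hvy _. rewrite /= Hvy Hq => /(_ isT Hlq). by [].
Qed.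

Lemma minpath_end r v p t z : minpath r v p t -> z \in v :: p -> r z t -> z != t ->
  exists l, v :: p = l ++ [:: z; t].
Proof.
case=> Hp Hl Hm; rewrite inE => /orP [/eqP ->|Hz] Hzt Hnzt.
  case/lastP: p Hp Hl Hm => [|p' x] Hp Hl Hm.
    by rewrite /= in Hl; rewrite Hl eqxx in Hnzt.
  rewrite last_rcons in Hl; subst x.
  case: p' Hp Hm => [|a p'] Hp Hm; first by exists [::].
  have := Hm [:: t]; rewrite /= Hzt => /(_ isT erefl).
  by rewrite size_rcons.
move: Hz Hp Hl Hm => /splitPr [p1 p2] Hp Hl Hm.
rewrite last_cat /= in Hl.
case/lastP: p2 Hp Hl Hm => [|p2' x] Hp Hl Hm.
  by rewrite /= in Hl; rewrite Hl eqxx in Hnzt.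
rewrite last_rcons in Hl; subst x.
case: p2' Hp Hm => [|a p2'] Hp Hm.
  by exists (v :: p1).
have := Hm (p1 ++ [:: z; t]).
move: Hp; rewrite cat_path => /andP [Hp1 /andP [Hlz _]].
rewrite cat_path Hp1 /= Hlz Hzt => /(_ isT).
rewrite last_cat /= => /(_ erefl).
rewrite !size_cat /= size_rcons; lia.
Qed.

Lemma minpath_end_uniq r v p t z1 z2 : minpath r v p t ->
  z1 \in v :: p -> r z1 t -> z1 != t ->
  z2 \in v :: p -> r z2 t -> z2 != t -> z1 = z2.
Proof.
move=> Hm H1 H1t H1n H2 H2t H2n.
have [l1 E1] := minpath_end Hm H1 H1t H1n.
have [l2 E2] := minpath_end Hm H2 H2t H2n.
have : l1 ++ [:: z1; t] = l2 ++ [:: z2; t] by rewrite -E1 -E2.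
move=> E; have := congr1 rev E; rewrite !rev_cat.
by rewrite /rev /= => -[].
Qed.

End Aux.

Section Main.
Variables (T : finType) (e : rel T) (g delta : nat).
Hypotheses (Hsym : symmetric e) (Hirr : irreflexive e).
Hypothesis Hgir : forall s, is_cycle e s -> g <= size s.
Hypothesis Hdeg : forall v, delta <= deg e v.
Hypothesis Hd3 : 3 <= delta.

Lemma nbhdE v w : (w \in nbhd e v) = e v w.
Proof. by rewrite /nbhd inE. Qed.

Lemma whole_bound : (exists s, is_cycle e s /\ size s = g) -> delta + g - 3 <= #|[set: T]|.
Proof.
case=> [[|c q]] [[Hu Hs Hc]] Hsz; first by rewrite /= in Hs.
set C := [set x in c :: q].
have HC : #|C| = g by rewrite cardsE -Hsz; apply/card_uniqP.
have Hsub : nbhd e c :&: C \subset [set head c q; last c q].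
  apply/subsetP => x; rewrite !inE => /andP [Hcx /orP [/eqP Ex|Hx]].
    by rewrite Ex Hirr in Hcx.
  move: Hx Hu Hc Hsz => /splitPr [q1 q2] Hu Hc Hsz.
  case: q1 Hu Hc Hsz => [|a q1] Hu Hc Hsz; first by rewrite eqxx.
  case/lastP: q2 Hu Hc Hsz => [|q2 b] Hu Hc Hsz.
    by rewrite last_cat /= eqxx orbT.
  exfalso.
  have Hcyc : is_cycle e (c :: a :: q1 ++ [:: x]).
    split.
    - move: Hu; rewrite -[c :: a :: q1 ++ x :: rcons q2 b]/((c :: a :: q1) ++ x :: rcons q2 b).
      rewrite -[c :: a :: q1 ++ [:: x]]/((c :: a :: q1) ++ [:: x]).
      rewrite !cat_uniq /= !andbT orbF => /and4P [-> /norP [-> _] _ _] //.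
    - by rewrite /= size_cat addn1.
    - move: Hc; rewrite /cycle /= => /andP [-> Hp]; rewrite /=.
      move: Hp; rewrite rcons_cat /= cat_path /= => /andP [Hp1 /andP [Hx _]].
      rewrite rcons_cat /= cat_path Hp1 /= Hx /= Hsym.
      by rewrite andbT.
  have := Hgir Hcyc; move: Hsz; rewrite /= !size_cat /= size_rcons; lia.
have Hle2 : #|nbhd e c :&: C| <= 2.
  apply: leq_trans (subset_leq_card Hsub) _; rewrite cards2; by case: (_ != _).
have HU : #|C :|: nbhd e c| <= #|[set: T]| by apply: subset_leq_card; apply: subsetT.
move: HU; rewrite cardsU setIC HC.
have := Hdeg c; rewrite /deg; lia.
Qed.

End Main.

Section Main2.
Variables (T : finType) (e : rel T) (g delta : nat).
Hypotheses (Hsym : symmetric e) (Hirr : irreflexive e).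
Hypothesis Hgir : forall s, is_cycle e s -> g <= size s.
Hypothesis Hdeg : forall v, delta <= deg e v.
Hypothesis Hd3 : 3 <= delta.
Variable S : {set T}.
Hypothesis HSc : induced_connected e S.

Definition relS := [rel a b | [&& e a b, a \in S & b \in S]].

Lemma path_relS v p : path relS v p -> path e v p /\ {subset p <= S}.
Proof.
elim: p v => [|y p IH] v //= /andP [/and3P [H1 H2 H3] Hp].
have [Hp' Hs] := IH _ Hp; split; first by rewrite H1.
by move=> x; rewrite !inE => /orP [/eqP ->|]; [|apply: Hs].
Qed.

Definition Inv (X : {set T}) := S \subset X /\ forall x, x \in X -> x \notin S ->
  exists2 y, y \in S & [/\ nbhd e x :&: X = [set y], nbhd e y \subset X &
     forall x', x' \in X -> x' \notin S -> e x' y -> x' = x].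

Lemma deg_small v (y u : T) X : nbhd e v :&: X = [set y] -> nbhd e v :\: X \subset [set u] -> False.
Proof.
move=> H1 H2; have := Hdeg v; rewrite /deg -(cardsID X) H1 cards1.
have := subset_leq_card H2; rewrite cards1; move: Hd3; clear; lia.
Qed.


Lemma inv_step X u v : Inv X -> v \in S -> u \notin X ->
  nbhd e v :\: X = [set u] -> nbhd e u :&: X = [set v] -> Inv (u |: X).
Proof.
move=> [HSX HX] HvS HuX Hv Hu.
have HvX : v \in X by apply: (subsetP HSX).
have Huv : u \in nbhd e v by move: (set11 u); rewrite -Hv inE => /andP [_ ->].
have Hvsub : nbhd e v \subset u |: X.
  apply/subsetP => w Hw; rewrite !inE; case: (boolP (w \in X)) => HwX; first by rewrite orbT.
  by rewrite orbF -in_set1 -Hv inE HwX Hw.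
have HuX' : forall x, x \in X -> e x u -> x = v.
  by move=> x Hx Hxu; apply/eqP; rewrite -in_set1 -Hu !inE Hx Hsym Hxu.
split; first by apply: subset_trans HSX (subsetUr _ _).
move=> x; rewrite !inE => /orP [/eqP ->|Hx] HxS.
  exists v => //; split => //.
  - apply/setP => w; case: (eqVneq w u) => [->|Hwu].
      rewrite !inE Hirr /=; apply/esym/eqP => Euv; by rewrite Euv HvX in HuX.
    by move/setP: Hu => /(_ w); rewrite !inE (negbTE Hwu).
  - move=> x' ; rewrite !inE => /orP [/eqP ->//|Hx'] Hx'S Hx'v.
    have [y Hy [Hy1 Hy2 _]] := HX _ Hx' Hx'S.
    have : v \in nbhd e x' :&: X by rewrite !inE Hx'v HvX.
    rewrite Hy1 => /set1P Evy; subst y.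
    by move: (subsetP Hy2 _ Huv); rewrite (negbTE HuX).
have [y Hy [Hy1 Hy2 Hy3]] := HX _ Hx HxS.
exists y => //; split.
- apply/setP => w; rewrite -Hy1 !inE; case: (eqVneq w u) => [->|] //=.
  rewrite (negbTE HuX) andbT andbF; apply/negbTE/negP => Hxu.
  by move: HxS; rewrite (HuX' _ Hx Hxu) HvS.
- by apply: subset_trans Hy2 (subsetUr _ _).
- move=> x'; rewrite !inE => /orP [/eqP ->|Hx'] Hx'S Hx'y; last by apply: Hy3.
  have Eyv : y = v by apply/set1P; rewrite -Hu !inE Hx'y (subsetP HSX).
  subst y; by move: (subsetP Hy2 _ Huv); rewrite (negbTE HuX).
Qed.


Lemma count_bound v p t (A : {set T}) : v \in S -> minpath relS v p t -> A \subset S ->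
  A :&: [set x in v :: p] = set0 -> #|A| + (size p).+1 <= #|S|.
Proof.
move=> HvS Hm HA HI.
have Hu := minpath_uniq Hm.
case: Hm => Hp _ _; have [_ HpS] := path_relS Hp.
have HP : [set x in v :: p] \subset S.
  by apply/subsetP => x; rewrite inE inE => /orP [/eqP ->|/HpS].
have HU : A :|: [set x in v :: p] \subset S by rewrite subUset HA HP.
have := subset_leq_card HU; rewrite cardsU HI cards0 subn0 cardsE.
by move/card_uniqP: Hu => ->.
Qed.

Lemma cardD1_ge (A : {set T}) x : #|A| <= (#|A :\ x|).+1.
Proof. by rewrite (cardsD1 x A); case: (x \in A). Qed.


Lemma closing X u v w : Inv X -> v \in S -> u \notin X ->
  nbhd e v :\: X = [set u] -> e u w -> w \in X -> w != v -> delta + g - 3 <= #|S|.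
Proof.
move=> [HSX HX] HvS HuX Hv Huw HwX Hwv.
have HvX : v \in X by apply: (subsetP HSX).
have Huv : e v u by move: (set11 u); rewrite -Hv !inE => /andP [_ ->].
have HuS : u \notin S by apply: contra HuX; apply: (subsetP HSX).
have NvS : forall y, e v y -> y != u -> y \in S.
  move=> y Hvy Hyu; have HyX : y \in X.
    apply/negPn/negP => HyX; move: Hyu.
    have : y \in nbhd e v :\: X by rewrite !inE HyX Hvy.
    by rewrite Hv inE => ->.
  apply/negPn/negP => HyS.
  have [y0 Hy0 [H1 H2 _]] := HX _ HyX HyS.
  have : v \in nbhd e y :&: X by rewrite !inE Hsym Hvy HvX.
  rewrite H1 => /set1P Ev; subst y0.
  have : u \in nbhd e v by rewrite !inE.
  by move/(subsetP H2); rewrite (negbTE HuX).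
have Hstart : forall p1 p t, minpath relS v (p1 :: p) t ->
    let A := nbhd e v :\ u :\ p1 in
    [/\ A \subset S, A :&: [set x in v :: p1 :: p] = set0 & delta - 2 <= #|A|].
  move=> p1 p t Hm A; split.
  - by apply/subsetP => y; rewrite !inE => /and3P [_ Hyu Hvy]; apply: NvS.
  - apply/setP => y; rewrite !inE; apply/negbTE/negP => /andP [/and3P [Hyp1 Hyu Hvy] Hy].
    case/orP: Hy => [/eqP Eyv|Hy]; first by rewrite Eyv Hirr in Hvy.
    have := minpath_start Hm Hy; rewrite /= HvS Hvy NvS //= => /(_ isT) Eyp.
    by rewrite Eyp eqxx in Hyp1.
  - have := Hdeg v; rewrite /deg /A.
    have := cardD1_ge (nbhd e v) u; have := cardD1_ge (nbhd e v :\ u) p1; move: Hd3; clear; lia.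
case: (boolP (w \in S)) => HwS.
  have [[|p1 p] Hm] := minpath_exists (HSc HvS HwS).
    by case: Hm => _ /= Ew _; rewrite Ew eqxx in Hwv.
  have [HA HI HAc] := Hstart _ _ _ Hm.
  have Hcb := count_bound HvS Hm HA HI.
  have Hu := minpath_uniq Hm.
  case: (Hm) => Hp Hl _; have [Hpe HpS] := path_relS Hp.
  have Hcyc : is_cycle e (u :: v :: p1 :: p).
    split.
    - rewrite cons_uniq Hu andbT; apply: contra HuS.
      by rewrite inE => /orP [/eqP ->|/HpS].
    - by [].
    - rewrite /cycle rcons_cons /= Hsym Huv /=.
      move: Hpe Hl => /= /andP [-> Hpe'] Hl'.
      by rewrite rcons_path Hpe' Hl' Hsym Huw.
  have := Hgir Hcyc; move: Hcb HAc => /=; move: Hd3; clear; lia.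
have [y0 Hy0S [Hw1 Hw2 Hw3]] := HX _ HwX HwS.
have Hwy0 : e w y0 by move: (set11 y0); rewrite -Hw1 !inE => /andP [->].
have Hy0v : y0 != v.
  apply/negP => /eqP E; subst y0.
  have : u \in nbhd e v by rewrite !inE.
  by move/(subsetP Hw2); rewrite (negbTE HuX).
have [[|p1 p] Hm] := minpath_exists (HSc HvS Hy0S).
  by case: Hm => _ /= Ew _; rewrite Ew eqxx in Hy0v.
have [HA HI HAc] := Hstart _ _ _ Hm.
have Hu := minpath_uniq Hm.
case: (Hm) => Hp Hl _; have [Hpe HpS] := path_relS Hp.
have HPS : forall x, x \in v :: p1 :: p -> x \in S.
  by move=> x; rewrite inE => /orP [/eqP ->|/HpS].
have Hcyc : is_cycle e (u :: rcons (v :: p1 :: p) w).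
  split.
  - rewrite cons_uniq rcons_uniq Hu andbT mem_rcons inE negb_or.
    rewrite (contra (HPS w)) // andbT.
    apply/andP; split; first by apply: contraNneq HuX => ->.
    by apply: contra HuS => /HPS.
  - by rewrite /= size_rcons.
  - rewrite /cycle rcons_path rcons_path /= Hsym Huv /=.
    move: Hpe Hl => /= -> /= ->.
    by rewrite Hsym Hwy0 last_rcons Hsym Huw.
have Hg := Hgir Hcyc; rewrite /= size_rcons /= in Hg.
have NwS : forall y, e y0 y -> y != w -> y \in S.
  move=> y Hy0y Hyw; have HyX : y \in X by apply: (subsetP Hw2); rewrite !inE.
  apply/negPn/negP => HyS.
  have [y1 Hy1 [H1 _ _]] := HX _ HyX HyS.
  have : y0 \in nbhd e y :&: X by rewrite !inE Hsym Hy0y (subsetP HSX).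
  rewrite H1 => /set1P Ey; subst y1.
  by move: Hyw; rewrite (Hw3 _ HyX HyS); [rewrite eqxx | rewrite Hsym].
set P := [set x in v :: p1 :: p].
set B := nbhd e y0 :\ w.
have HBc : delta - 1 <= #|B|.
  have := Hdeg y0; rewrite /deg /B; have := cardD1_ge (nbhd e y0) w; move: Hd3; clear; lia.
have HBP : #|B :&: P| <= 1.
  apply/card_le1_eqP => x1 x2 /setIP [Hb1 Hx1] /setIP [Hb2 Hx2].
  move: Hb1 Hb2; rewrite !inE => /andP [_ H1] /andP [_ H2].
  rewrite /P inE in Hx1; rewrite /P inE in Hx2.
  apply: (minpath_end_uniq Hm Hx2 _ _ Hx1).
  - by rewrite /= Hsym H2 HPS.
  - by apply: contraTneq H2 => ->; rewrite Hirr.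
  - by rewrite /= Hsym H1 HPS.
  - by apply: contraTneq H1 => ->; rewrite Hirr.
have : 0 < #|B :\: P| by move: (cardsID P B) HBP HBc Hd3; clear; lia.
case/card_gt0P => z; rewrite !inE => /and3P [HzP Hzw Hy0z].
have HzS : z \in S by apply: NwS.
case: (boolP (z \in nbhd e v :\ u :\ p1)) => HzA.
  have Hcyc2 : is_cycle e (z :: v :: p1 :: p).
    split.
    - by rewrite cons_uniq Hu andbT.
    - by [].
    - move: HzA; rewrite !inE => /and3P [_ _ Hvz].
      rewrite /cycle rcons_cons /= Hsym Hvz /=.
      move: Hpe Hl => /= /andP [-> Hpe'] Hl'.
      by rewrite rcons_path Hpe' Hl' Hy0z.
  have := Hgir Hcyc2; have := count_bound HvS Hm HA HI; move: HAc => /=; move: Hd3; clear; lia.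
have HA' : z |: (nbhd e v :\ u :\ p1) \subset S by rewrite subUset sub1set HzS HA.
have HI' : (z |: (nbhd e v :\ u :\ p1)) :&: P = set0.
  rewrite setIUl HI setU0; apply/setP => y; rewrite !inE.
  by apply/negbTE/andP => -[/eqP -> Hz]; rewrite Hz in HzP.
have := count_bound HvS Hm HA' HI'; rewrite cardsU1 HzA /=; move: HAc Hg; move: Hd3; clear; lia.
Qed.


Hypothesis Hex : exists s, is_cycle e s /\ size s = g.

Lemma main_ind X : forces_all e X -> Inv X -> delta + g - 3 <= #|S|.
Proof.
elim => {X} [X -> | X u [v [HvX HuX Hnb]] _ IH] [HSX HX].
  case: (boolP ([set: T] \subset S)) => HS.
    have -> : S = [set: T] by apply/eqP; rewrite eqEsubset subsetT HS.
    exact: (whole_bound Hsym Hirr Hgir Hdeg Hd3 Hex).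
  case/subsetPn: HS => x _ HxS.
  have [y _ [Hy1 _ _]] := HX x (in_setT x) HxS.
  by exfalso; apply: (deg_small (u := x) Hy1); rewrite setDT sub0set.
have HvS : v \in S.
  apply/negPn/negP => HvS.
  have [y _ [Hy1 _ _]] := HX v HvX HvS.
  by exfalso; apply: (deg_small (u := u) Hy1); rewrite Hnb subxx.
have Hvu : e v u by move: (set11 u); rewrite -Hnb !inE => /andP [_ ->].
case: (boolP [exists w, (w \in nbhd e u :&: X) && (w != v)]) => Hcl.
  case/existsP: Hcl => w /andP [/setIP [Hw HwX] Hwv].
  rewrite inE in Hw.
  exact: (closing (conj HSX HX) HvS HuX Hnb Hw HwX Hwv).
apply: IH; apply: (inv_step (conj HSX HX) HvS HuX Hnb).
apply/setP => w; rewrite in_set1; case: (eqVneq w v) => [->|Hwv].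
  by rewrite !inE Hsym Hvu HvX.
by move/existsPn: Hcl => /(_ w); rewrite Hwv andbT => /negbTE.
Qed.

End Main2.

Lemma cfs_bound (T : finType) (e : rel T) (g delta : nat) (S : {set T}) :
  simple_graph e -> girth e g -> min_degree e delta -> 3 <= delta ->
  connected_forcing_set e S -> delta + g - 3 <= #|S|.
Proof.
move=> [Hsym Hirr] [Hex Hgir] [_ Hdeg] Hd3 [HF HSc].
apply: (main_ind Hsym Hirr Hgir Hdeg Hd3 HSc Hex HF).
split => // x Hx; by rewrite Hx.
Qed.


Section Complete.
Variable d : nat.
Hypothesis Hd : 3 <= d.
Definition KT := 'I_d.+1.
Definition Ke : rel KT := fun i j => i != j.

Lemma K_simple : simple_graph Ke.
Proof. by split; [move=> i j; rewrite /Ke eq_sym | move=> i; rewrite /Ke eqxx]. Qed.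

Lemma K_conn : connected_graph Ke.
Proof.
move=> x y; case: (eqVneq x y) => [->|Hxy]; first exact: connect0.
by apply: connect1.
Qed.

Lemma K_nbhd v : nbhd Ke v = [set~ v].
Proof. by apply/setP => w; rewrite !inE /Ke eq_sym. Qed.

Lemma K_deg v : deg Ke v = d.
Proof. by rewrite /deg K_nbhd cardsC1 card_ord. Qed.

Lemma K_girth : girth Ke 3.
Proof.
split; last by move=> s [].
have H1 : ((inord 1 : KT) : nat) = 1 by rewrite inordK //; lia.
have H2 : ((inord 2 : KT) : nat) = 2 by rewrite inordK //; lia.
exists [:: ord0; inord 1; inord 2]; split => //; split => //.
- rewrite /= !inE -!val_eqE /= H1 H2 //.
- by rewrite /= /Ke -!val_eqE /= H1 H2.
Qed.

Lemma K_mindeg : min_degree Ke d.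
Proof. by split; [exists ord0 | move=> v]; rewrite K_deg. Qed.

Lemma K_Fc : is_Fc Ke d.
Proof.
split; last first.
  move=> S HS; have := cfs_bound K_simple K_girth K_mindeg Hd HS.
  by rewrite addnK.
exists [set~ ord0]; split; last by rewrite cardsC1 card_ord.
split.
  apply: (@forces_more _ _ _ ord0).
    exists ord_max; split.
    - by rewrite !inE -val_eqE /=; lia.
    - by rewrite !inE eqxx.
    - apply/setP => w; rewrite K_nbhd !inE.
      case: (eqVneq w ord0) => [->|] //=.
      by rewrite -val_eqE /=; lia.
  by apply: forces_done; apply/setP => w; rewrite !inE orbN.
move=> x y Hx Hy; case: (eqVneq x y) => [->|Hxy]; first exact: connect0.
by apply: connect1; rewrite /= Hx Hy !andbT.
Qed.

End Complete.

Theorem theorem6 :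
  (forall (T : finType) (e : rel T) (g delta k : nat),
      simple_graph e -> connected_graph e ->
      girth e g -> 3 <= g ->
      min_degree e delta -> 3 <= delta ->
      is_Fc e k -> delta + g - 3 <= k)
  /\
  (forall delta : nat, 3 <= delta ->
     exists (T : finType) (e : rel T) (g : nat),
       [/\ simple_graph e, connected_graph e, girth e g /\ 3 <= g,
           min_degree e delta & is_Fc e (delta + g - 3)]).
Proof.
split.
  move=> T e g delta k Hs _ Hg _ Hm Hd [[S [HS <-]] _].
  exact: cfs_bound Hs Hg Hm Hd HS.
move=> d Hd; exists (KT d), (@Ke d), 3; split.
- exact: K_simple.
- exact: K_conn.
- by split => //; apply: K_girth.
- exact: K_mindeg.
- by rewrite addnK; apply: K_Fc.
Qed.
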